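(* Let $X$ be a real Banach space, $J=\{1,\ldots,l\}$, $g_j\colon X\to\mathbb{R}$, $M=\{x\in X\mid g_j(x)\le0\ \forall j\in J\}$, $\overline{x}\in M$ and $J(\overline{x})=\{j\in J\mid g_j(\overline{x})=0\}$. Suppose that the functions $g_j$, $j\in J(\overline{x})$, are quasidifferentiable at $\overline{x}$ (with given quasidifferentials) and the functions $g_j$, $j\notin J(\overline{x})$, are upper semicontinuous at $\overline{x}$. Let $z_j^*\in\overline{\partial} g_j(\overline{x})$, $j\in J(\overline{x})$, be such that $0\notin\operatorname{co}\{\underline{\partial} g_j(\overline{x})+z_j^*\mid j\in J(\overline{x})\}$. Then $$\Big\{v\in X\Bigm| s(\underline{\partial} g_j(\overline{x})+z_j^*,v)\le0,\ j\in J(\overline{x})\Big\}\subseteq T_M(\overline{x}).$$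
   Context: $X^*$ is the dual with pairing $\langle\cdot,\cdot\rangle$. $g$ is quasidifferentiable at $x$ if $g'(x,v)=\lim_{\alpha\to+0}(g(x+\alpha v)-g(x))/\alpha$ exists finitely for all $v$ and there is a pair $[\underline{\partial} g(x),\overline{\partial} g(x)]$ of convex weak$^*$ compact subsets of $X^*$ with $g'(x,v)=\max_{x^*\in\underline{\partial} g(x)}\langle x^*,v\rangle+\min_{y^*\in\overline{\partial} g(x)}\langle y^*,v\rangle$ for all $v$; a specific one is fixed. $s(C,v)=\sup_{x^*\in C}\langle x^*,v\rangle$; $\operatorname{co}$ is the convex hull of the union of the listed sets. $T_M(x)$ is the contingent cone: all $v$ such that there exist $\alpha_n\to+0$, $v_n\to v$ with $x+\alpha_nv_n\in M$. *)

(* Defs.v *)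
From HB Require Import structures.
From mathcomp Require Import all_boot all_order all_algebra.
From mathcomp Require Import all_classical all_reals all_analysis.
Set Implicit Arguments. Unset Strict Implicit. Unset Printing Implicit Defensive.
Import Order.TTheory GRing.Theory Num.Theory.
Import numFieldNormedType.Exports.
Local Open Scope classical_set_scope.
Local Open Scope ring_scope.

Section Defs.
Context {R : realType} {X : normedModType R}.

Definition is_dual (f : X -> R) : Prop :=
  (forall (a : R) (u v : X), f (a *: u + v) = a * f u + f v) /\ continuous f.

(* convex, weak* compact subset of X^*; the weak* topology on X^* is the
   subspace topology of the pointwise (product) topology on X -> R *)
Definition convex_fset (C : set (X -> R)) : Prop :=
  forall f h, C f -> C h -> forall t : R, 0 <= t <= 1 ->
    C (fun v => t * f v + (1 - t) * h v).

Definition wstar_cc (C : set (X -> R)) : Prop :=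
  (forall f, C f -> is_dual f) /\ convex_fset C /\
  @compact {ptws X -> R} C.

Definition quasidiff (g : X -> R) (x : X) (Dl Du : set (X -> R)) : Prop :=
  wstar_cc Dl /\ wstar_cc Du /\
  exists d : X -> R, forall v : X,
    ((fun a : R => (g (x + a *: v) - g x) / a) @ 0^'+ --> d v) /\
    exists f1 f2, Dl f1 /\ Du f2 /\
      (forall f, Dl f -> f v <= f1 v) /\ (forall f, Du f -> f2 v <= f v) /\
      d v = f1 v + f2 v.

Definition usc_at (g : X -> R) (x : X) : Prop :=
  forall e : R, 0 < e -> \forall y \near x, g y < g x + e.

Definition supp (C : set (X -> R)) (v : X) : \bar R :=
  ereal_sup [set (f v)%:E | f in C].

Definition translate (C : set (X -> R)) (z : X -> R) : set (X -> R) :=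
  [set (fun v => f v + z v) | f in C].

Definition conv_hull (A : set (X -> R)) : set (X -> R) :=
  [set y | exists (n : nat) (lam : 'I_n -> R) (p : 'I_n -> X -> R),
     (forall i, 0 <= lam i) /\ \sum_(i < n) lam i = 1 /\
     (forall i, A (p i)) /\ y = (fun v => \sum_(i < n) lam i * p i v)].

Definition contingent_cone (M : set X) (x : X) : set X :=
  [set v | exists (al : nat -> R) (vs : nat -> X),
     (forall n, 0 < al n) /\ al @ \oo --> 0 /\ vs @ \oo --> v /\
     (forall n, M (x + al n *: vs n))].

End Defs.

(* Main.v *)
Require Import Defs.
From HB Require Import structures.
From mathcomp Require Import all_boot all_order all_algebra.
From mathcomp Require Import all_classical all_reals all_analysis.
From mathcomp Require Import ring lra.
Import Order.TTheory GRing.Theory Num.Theory.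
Import numFieldNormedType.Exports.
Local Open Scope classical_set_scope.
Local Open Scope ring_scope.

Lemma cont_sum {R : realType} {T : topologicalType} {I : Type} (s : seq I)
  (F : I -> T -> R) : (forall i, continuous (F i)) ->
  continuous (fun t => \sum_(i <- s) F i t).
Proof.
move=> Fc; elim: s => [|i s IH].
  by under eq_fun do rewrite big_nil; move=> t; exact: cvg_cst.
under eq_fun do rewrite big_cons.
by move=> t; apply: cvgD; [exact: Fc| exact: IH].
Qed.

Definition TT {R : realType} (X : normedModType R) (l : nat) :=
  prod_topology (fun _ : 'I_l => ({ptws X -> R} * R)%type).
HB.instance Definition _ (R : realType) (X : normedModType R) l := Topological.on (TT X l).
HB.instance Definition _ (R : realType) (X : normedModType R) l := isPointed.Build (TT X l) (fun _ => (fun _ => 0, 0)).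

Definition Phi {R : realType} {X : normedModType R} {l : nat}
  (c : 'I_l -> X -> R) (G : TT X l) (x : X) : R :=
  \sum_(j < l) (G j).2 * ((G j).1 x + c j x).

Lemma snd_cont (R : realType) (X : normedModType R) (l : nat) (j : 'I_l) :
  continuous (fun G : TT X l => (G j).2).
Proof.
move=> G; apply: (@continuous_comp _ _ _ (fun G : TT X l => G j) snd).
  exact: (@proj_continuous _ (fun _ : 'I_l => ({ptws X -> R} * R)%type) j).
exact: cvg_snd.
Qed.

Lemma Phi_cont (R : realType) (X : normedModType R) (l : nat)
  (c : 'I_l -> X -> R) x : continuous (fun G : TT X l => Phi c G x).
Proof.
rewrite /Phi.
have pj (j : 'I_l) : continuous (fun G : TT X l => G j).
  exact: (@proj_continuous _ (fun _ : 'I_l => ({ptws X -> R} * R)%type) j).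
have ev : continuous (fun f : {ptws X -> R} => f x).
  exact: (@proj_continuous _ (fun _ : X => R) x).
have h2 (j : 'I_l) : continuous (fun G : TT X l => (G j).1 x).
  move=> G; apply: (@continuous_comp _ _ _ (fun G : TT X l => (G j).1) (fun f : {ptws X -> R} => f x)); last exact: ev.
  apply: (@continuous_comp _ _ _ (fun G : TT X l => G j) fst); first exact: pj.
  exact: cvg_fst.
apply: cont_sum => j G.
apply: cvgM.
- exact: nbhs_filter.
- exact: snd_cont.
apply: cvgD.
- exact: nbhs_filter.
- exact: h2.
apply: cvg_cst; exact: nbhs_filter.
Qed.

Section dual.
Context {R : realType} {X : normedModType R} (f : X -> R) (hf : is_dual f).
Lemma dual0 : f 0 = 0.
Proof. case: hf => lin _; have := lin 1 0 0; rewrite scaler0 addr0 mul1r; lra. Qed.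
Lemma dualZ a u : f (a *: u) = a * f u.
Proof. case: hf => lin _; by rewrite -[a *: u]addr0 lin dual0 addr0. Qed.
Lemma dualD u v : f (u + v) = f u + f v.
Proof. case: hf => lin _; by rewrite -[u]scale1r lin mul1r scale1r. Qed.
Lemma dualN u : f (- u) = - f u.
Proof. by rewrite -scaleN1r dualZ mulN1r. Qed.
Lemma dual_sum (s : seq X) (a : X -> R) :
  f (\sum_(x <- s) a x *: x) = \sum_(x <- s) a x * f x.
Proof.
elim: s => [|x s IH]; first by rewrite !big_nil dual0.
by rewrite !big_cons dualD dualZ IH.
Qed.
End dual.

Lemma alg_key (R : realType) (a b : R) : 0 <= b ->
  (forall t, 0 < t <= 1 -> 0 <= 2 * t * a + t * t * b) -> 0 <= a.
Proof.
move=> b0 H; rewrite leNgt; apply/negP => a0.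
pose t := - a / (b - a).
have ba : 0 < b - a by lra.
have ht : t * (b - a) = - a by rewrite /t divfK // gt_eqF.
have t0 : 0 < t by rewrite /t divr_gt0 // oppr_gt0.
have t1 : t <= 1 by rewrite /t ler_pdivrMr // mul1r; lra.
have := H t; rewrite t0 t1 => /(_ isT); nra.
Qed.

Lemma sep (R : realType) (X : normedModType R) (l : nat) (act : set 'I_l)
  (Dl : 'I_l -> set (X -> R)) (z : 'I_l -> X -> R) :
  (forall j, act j -> wstar_cc (Dl j)) ->
  (forall j, act j -> Dl j !=set0) ->
  (forall j, act j -> is_dual (z j)) ->
  ~ conv_hull (\bigcup_(j in act) translate (Dl j) (z j)) (fun _ => 0) ->
  exists (w : X) (m : R), 0 < m /\
    forall j, act j -> forall f, Dl j f -> f w + z j w <= - m.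
Proof.
move=> hK hne hz hnc.
have [[j0 hj0]|noact] := pselect (exists j, act j); last first.
  by exists 0, 1; split => // j aj; exfalso; apply: noact; exists j.
pose e j := if pselect (act j) is left _ then j else j0.
have ae j : act (e j) by rewrite /e; case: pselect.
have ee j : act j -> e j = j by rewrite /e; case: pselect.
pose Ij (j : 'I_l) : set R := if pselect (act j) is left _ then `[(0:R), 1]%classic else [set 0].
have Ij_cpt j : compact (Ij j).
  by rewrite /Ij; case: pselect => _; [exact: segment_compact | exact: compact_set1].
have Ij_prop j u : Ij j u -> 0 <= u <= 1 /\ (~ act j -> u = 0).
  rewrite /Ij; case: pselect => aj.
    by rewrite /= in_itv /= => h; split => //.
  by move=> ->; split => //; rewrite lexx ler01.
have Ij_in j u : act j -> 0 <= u <= 1 -> Ij j u.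
  by rewrite /Ij; case: pselect => // _ _ h; rewrite /= in_itv /=.
have Ij0 j : Ij j 0.
  by rewrite /Ij; case: pselect => // _; rewrite /= in_itv /= lexx ler01.
have Ij_scale j t u : 0 <= t <= 1 -> Ij j u -> Ij j (t * u).
  move=> ht /Ij_prop [hu hn]; have [aj|naj] := pselect (act j).
    apply: Ij_in => //; apply/andP; split; first by apply: mulr_ge0; lra.
    by rewrite -[1]mulr1; apply: ler_pM; lra.
  by rewrite hn // mulr0.
pose c j := z (e j).
pose K j := Dl (e j).
have Kc j : @compact {ptws X -> R} (K j) by have [_ [_ ]] := hK _ (ae j).
pose B := [set G : TT X l | forall j, (K j `*` Ij j) (G j)].
have Bc : compact B.
  exact: (@tychonoff _ (fun _ : 'I_l => ({ptws X -> R} * R)%type)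
     (fun j => K j `*` Ij j) (fun j => compact_setX (Kc j) (Ij_cpt j))).
pose S := [set G : TT X l | \sum_(j < l) (G j).2 = 1].
have Sc : closed S.
  apply: (@preimage_closed _ _ (fun G : TT X l => \sum_(j < l) (G j).2) [set x | x = 1]); last exact: closed_eq.
  move=> G _; apply: (@cont_sum R (TT X l) _ _ (fun j G => (G j).2)) => j.
  exact: snd_cont.
pose P := B `&` S.
have Pc : compact P by exact: compact_closedI.
pose U := \bigcup_(j in act) translate (Dl j) (z j).
have hullP G : P G -> conv_hull U (fun x => Phi c G x).
  move=> [BG SG]; exists l, (fun j => (G j).2), (fun j => fun v => (G j).1 v + c j v).
  split; first by move=> i; have [_ /Ij_prop [/andP[]]] := BG i.
  split; first exact: SG.
  split => // i; exists (e i); first exact: ae.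
  by exists (G i).1 => //; have [] := BG i.
have nz G : P G -> exists x, Phi c G x != 0.
  move=> PG; apply/not_existsP => allz; apply: hnc.
  have -> : (fun _ : X => 0 : R) = (fun x => Phi c G x).
    by apply: funext => x; have := allz x; move/negP; rewrite negbK => /eqP ->.
  exact: hullP.
have Pcov : cover_compact P by move: Pc; rewrite compact_cover.
have := Pcov X setT (fun x => [set G : TT X l | Phi c G x != 0]).
case.
- move=> x _; apply: (@open_comp _ R (fun G : TT X l => Phi c G x) [set y : R | y != 0]); last exact: open_neq.
  by move=> G _; exact: Phi_cont.
- by move=> G PG; have [x hx] := nz G PG; exists x.
move=> D' _ cov.
pose s := finmap.enum_fset D'.
pose phi G := \sum_(x <- s) (Phi c G x * Phi c G x).
have phic : continuous phi.
  apply: (@cont_sum R (TT X l) _ _ (fun x G => Phi c G x * Phi c G x)) => x G.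
  by apply: cvgM; [exact: nbhs_filter|exact: Phi_cont|exact: Phi_cont].
have phipos G : P G -> 0 < phi G.
  move=> /cov [x xD hx]; rewrite /phi (bigD1_seq x) //=; last exact: finmap.fset_uniq.
  apply: ltr_pwDl; last by apply: sumr_ge0 => i _; by rewrite -expr2 sqr_ge0.
  by rewrite lt_def mulf_neq0 //= -expr2 sqr_ge0.
have [f0 hf0] := @choice _ _ (fun j f => K j f) (fun j => hne (e j) (ae j)).
have P0 : P !=set0.
  exists (fun j => (f0 j, if j == j0 then 1 else 0)); split.
    move=> j; split => //=; case: eqP => [->|_]; last exact: Ij0.
    by apply: Ij_in => //; rewrite ler01 lexx.
  by rewrite /S /= (bigD1 j0) //= eqxx big1 ?addr0 // => j /negbTE ->.
have [G PG Gmin] := compact_EVT_min P0 Pc (continuous_subspaceT phic).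
rewrite inE in PG.
pose m := phi G.
have m0 : 0 < m by exact: phipos.
pose p x := Phi c G x.
have key k : act k -> forall q, Dl k q ->
    m <= \sum_(x <- s) p x * (q x + z k x).
  move=> ak q hq.
  pose r x := q x + z k x.
  have H t : 0 < t <= 1 ->
      m <= \sum_(x <- s) (((1 - t) * p x + t * r x) * ((1 - t) * p x + t * r x)).
    move=> ht.
    have t0 : 0 < t by case/andP: ht.
    have t1 : t <= 1 by case/andP: ht.
    have [BG SG] := PG.
    pose lam j := (G j).2.
    pose F j := (G j).1.
    have lam01 j : 0 <= lam j <= 1 by have [_ /Ij_prop []] := BG j.
    have lk01 : 0 <= lam k <= 1 := lam01 k.
    have ptl : 0 <= (1 - t) * lam k by apply: mulr_ge0; lra.
    have ptl1 : (1 - t) * lam k <= 1 - t.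
      by rewrite -[X in _ <= X]mulr1; apply: ler_pM; lra.
    pose lk := (1 - t) * lam k + t.
    have lk0 : 0 < lk by rewrite /lk; lra.
    pose sc := (1 - t) * lam k / lk.
    have sc0 : 0 <= sc by rewrite /sc divr_ge0 //; lra.
    have sc1 : sc <= 1 by rewrite /sc ler_pdivrMr // mul1r /lk; lra.
    pose Fk := fun v => sc * F k v + (1 - sc) * q v.
    pose G' : TT X l := fun j => if j == k then (Fk, lk) else (F j, (1 - t) * lam j).
    have PG' : P G'.
      split.
        move=> j; rewrite /G'; case: eqP => [->|_].
          split => /=.
            rewrite /K (ee k ak).
            have [_ [cv _]] := hK k ak.
            apply: cv => //; last by rewrite sc0 sc1.
            by have := (BG k).1; rewrite /K (ee k ak).
          by apply: Ij_in => //; apply/andP; split; rewrite /lk; lra.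
        split => /=; first exact: (BG j).1.
        by apply: Ij_scale; [apply/andP; split; lra | exact: (BG j).2].
      rewrite /S /= (bigD1 k) //= /G' eqxx /=.
      rewrite (eq_bigr (fun j => (1 - t) * lam j)); last by move=> j /negbTE ->.
      rewrite -mulr_sumr.
      have := SG; rewrite /S /= (bigD1 k) //= => hs.
      have -> : \sum_(i < l | i != k) lam i = 1 - lam k by rewrite -hs; ring.
      rewrite /lk; ring.
    have PhiG' x : Phi c G' x = (1 - t) * p x + t * r x.
      have hp : p x = lam k * (F k x + c k x) +
          \sum_(j < l | j != k) lam j * (F j x + c j x) by rewrite /p /Phi (bigD1 k).
      rewrite hp /Phi (bigD1 k) //= /G' eqxx /=.
      rewrite (eq_bigr (fun j => (1 - t) * (lam j * (F j x + c j x)))); last first.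
        by move=> j /negbTE ->; rewrite /= mulrA.
      rewrite -mulr_sumr /Fk /c (ee k ak) /r /sc /lk.
      by field; rewrite gt_eqF.
    have := Gmin G' (mem_set PG').
    by rewrite /phi; under [X in _ <= X -> _]eq_bigr do rewrite PhiG'.
  pose a := \sum_(x <- s) p x * (r x - p x).
  pose b := \sum_(x <- s) (r x - p x) * (r x - p x).
  have b0 : 0 <= b by apply: sumr_ge0 => x _; rewrite -expr2 sqr_ge0.
  have : 0 <= a.
    apply: alg_key b0 _ => t ht; have := H t ht.
    rewrite (eq_bigr (fun x => p x * p x + (2 * t) * (p x * (r x - p x)) +
       (t * t) * ((r x - p x) * (r x - p x)))); last by move=> x _; ring.
    rewrite !big_split /= -!mulr_sumr -/a -/b /m /phi => h.
    have e1 : \sum_(x <- s) Phi c G x * Phi c G x = \sum_(i <- s) p i * p i by [].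
    lra.
  have -> : \sum_(x <- s) p x * (q x + z k x) = a + m.
    rewrite /a /m /phi -big_split /=; apply: eq_bigr => x _; rewrite /p /r; ring.
  lra.
exists (- \sum_(x <- s) p x *: x), m; split => // k ak f hf.
have df : is_dual f by have [+ _] := hK k ak; apply.
rewrite (dualN _ df) (dualN _ (hz k ak)) (dual_sum _ df) (dual_sum _ (hz k ak)).
have := key k ak f hf.
under eq_bigr do rewrite mulrDr.
rewrite big_split /=; lra.
Qed.

Theorem corollary2 (R : realType) (X : completeNormedModType R) (l : nat)
  (g : 'I_l -> X -> R) (xb : X)
  (Dl Du : 'I_l -> set (X -> R)) (z : 'I_l -> X -> R) :
  let M := [set x : X | forall j, g j x <= 0] in
  let act := [set j : 'I_l | g j xb = 0] in
  M xb ->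
  (forall j, act j -> quasidiff (g j) xb (Dl j) (Du j)) ->
  (forall j, ~ act j -> usc_at (g j) xb) ->
  (forall j, act j -> Du j (z j)) ->
  ~ conv_hull (\bigcup_(j in act) translate (Dl j) (z j)) (fun _ => 0) ->
  [set v : X | forall j, act j -> (supp (translate (Dl j) (z j)) v <= 0)%E]
    `<=` contingent_cone M xb.
Proof.
move=> M act Mxb hq husc hz hnc v hv.
have hK j : act j -> wstar_cc (Dl j) by move=> aj; have [] := hq j aj.
have hne j : act j -> Dl j !=set0.
  move=> aj; have [_ [_ [d hd]]] := hq j aj.
  by have [_ [f1 [_ [h1 _]]]] := hd 0; exists f1.
have hzd j : act j -> is_dual (z j).
  by move=> aj; have [_ [[hD _] _]] := hq j aj; exact: hD _ (hz j aj).
have [w [m [m0 hw]]] := @sep R X l act Dl z hK hne hzd hnc.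
have hv0 j : act j -> forall f, Dl j f -> f v + z j v <= 0.
  move=> aj f hf; have := hv j aj; rewrite /supp => h.
  rewrite -lee_fin; apply: le_trans h.
  by apply: ereal_sup_ubound; exists (fun u => f u + z j u) => //; exists f.
have claim (u : X) (eps : R) : 0 < eps ->
    (forall j, act j -> forall f, Dl j f -> f u + z j u <= - eps) ->
    \forall a \near 0^'+, M (xb + a *: u).
  move=> eps0 hu.
  apply: (@filter_forall _ _ (fun j a => g j (xb + a *: u) <= 0)) => j.
  have [aj|naj] := pselect (act j).
    have aj' : g j xb = 0 := aj.
    have [_ [_ [d hd]]] := hq j aj.
    have [hcv [f1 [f2 [hf1 [hf2 [_ [hmin hdv]]]]]]] := hd u.
    have du : d u < 0.
      rewrite hdv; have := hmin (z j) (hz j aj); have := hu j aj f1 hf1; lra.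
    have hn := cvgr_lt (d u) hcv 0 du.
    near=> a.
    have a0 : 0 < a by near: a; exact: nbhs_right_gt.
    have : (g j (xb + a *: u) - g j xb) / a < 0 by near: a; exact: hn.
    by rewrite aj' subr0 ltr_pdivrMr // mul0r => h; exact: ltW.
  have gneg : g j xb < 0.
    by rewrite lt_def (Mxb j) andbT; apply/eqP => h; apply: naj; exact: esym h.
  have hc : (fun a : R => xb + a *: u) @ 0^'+ --> xb.
    apply: cvg_at_right_filter.
    rewrite -[X in _ --> X](addr0 xb) -[X in _ --> xb + X](scale0r u).
    apply: cvgD; first exact: cvg_cst.
    by apply: cvgZr_tmp; exact: cvg_id.
  have := husc j naj (- g j xb); rewrite oppr_gt0 => /(_ gneg).
  rewrite addrN => hn.
  have h0 := hc _ hn.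
  near=> a; apply: ltW; near: a; exact: h0.
have hseq n : exists a : R, 0 < a < harmonic n /\ M (xb + a *: (v + harmonic n *: w)).
  have hn0 : (0 : R) < harmonic n by exact: harmonic_gt0.
  have hn : \forall a \near 0^'+, M (xb + a *: (v + harmonic n *: w)).
    apply: (claim _ (harmonic n * m)); first by rewrite mulr_gt0.
    move=> j aj f hf; have df : is_dual f by have [+ _] := hK j aj; apply.
    rewrite (dualD _ df) (dualZ _ df) (dualD _ (hzd j aj)) (dualZ _ (hzd j aj)).
    have := hv0 j aj f hf; have := hw j aj f hf => h1.
    have := ler_wpM2l (ltW hn0) h1; lra.
  have : \forall a \near 0^'+, (0 < a < harmonic n) /\ M (xb + a *: (v + harmonic n *: w)).
    near=> a; split; first (apply/andP; split).
    - by near: a; exact: nbhs_right_gt.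
    - by near: a; exact: nbhs_right_lt.
    - by near: a; exact: hn.
  by move/filter_ex => [a ha]; exists a.
have [al hal] := choice hseq.
exists al, (fun n => v + harmonic n *: w); split; [|split; [|split]].
- by move=> n; have [/andP[]] := hal n.
- apply: (@squeeze_cvgr _ _ _ _ (fun _ => 0) (fun n => harmonic n)).
  + by apply: nearW => n; have [/andP[a0 a1] _] := hal n; apply/andP; split; exact: ltW.
  + exact: cvg_cst.
  + exact: cvg_harmonic.
- rewrite -[X in _ --> X](addr0 v) -[X in _ --> v + X](scale0r w).
  apply: cvgD; first exact: cvg_cst.
  by apply: cvgZr_tmp; exact: cvg_harmonic.
- by move=> n; have [_] := hal n.
Unshelve. all: by end_near.
Qed.
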